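(* Assume (C1) and (C2). Then for every $u\in\mathbb{R}^{\mathbb{Z}_K\times\mathbb{Z}_M}$, $\sum_{k\in\mathbb{Z}_K}\sum_{j\in\mathbb{Z}_M}\big(u_{k,j}B_{k,j}(u)-\partial_{k,j}B_{k,j}(u)\big)=0.$
   Context: Fix integers $K,M\ge1$; $\mathbb{Z}_m=\mathbb{Z}/m\mathbb{Z}$, $\mathbb{Z}_m^*=\mathbb{Z}_m\setminus\{0\}$; component indices modulo $K$, site indices modulo $M$. Real coefficients $\alpha_k$, $\beta_k^l,\gamma_k^l$ ($l\in\mathbb{Z}_K^*$), $\lambda_k^{k-l,k-l'}$ ($l,l'\in\mathbb{Z}_K^*$, $l\ne l'$) are given. For $u\in\mathbb{R}^{\mathbb{Z}_K\times\mathbb{Z}_M}$: $w_{k,j}=\frac13(u_{k,j}^2+u_{k,j}u_{k,j+1}+u_{k,j+1}^2)$, $b_{k,j}^l=\frac12(u_{k,j}u_{k+l,j}+u_{k,j+1}u_{k+l,j+1})$, $r_{k,j}^l=u_{k-l,j}u_{k-l,j+1}$, $p_{k,j}^{l,l'}=\frac16(2u_{k-l,j}u_{k-l',j}+u_{k-l,j}u_{k-l',j+1}+u_{k-l,j+1}u_{k-l',j}+2u_{k-l,j+1}u_{k-l',j+1})$, $G_{k,j}=\alpha_k w_{k,j}+\sum_{l\in\mathbb{Z}_K^*}\beta_k^l b_{k,j}^l+\sum_{l\in\mathbb{Z}_K^*}\gamma_k^l r_{k,j}^l+\sum_{l\in\mathbb{Z}_K^*}\sum_{l'\in\mathbb{Z}_K^*,l'\ne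 l}\lambda_k^{k-l,k-l'}p_{k,j}^{l,l'}$, $B_{k,j}(u)=G_{k,j}-G_{k,j-1}$; $\partial_{k,j}=\partial/\partial u_{k,j}$. (C1) $\beta_k^a=2\gamma_{k+a}^a$ for all $k$, $a\in\mathbb{Z}_K^*$; (C2) $\lambda_k^{k-a,k-a'}=\lambda_k^{k-a',k-a}=\lambda_{k-a}^{k,k-a'}$ for all $k$ and $a,a'\in\mathbb{Z}_K^*$, $a\ne a'$. *)

(* Defs.v *)
From HB Require Import structures.
From mathcomp Require Import all_boot all_order all_algebra.
From mathcomp Require Import reals topology normedtype derive.
Set Implicit Arguments. Unset Strict Implicit. Unset Printing Implicit Defensive.
Import Order.TTheory GRing.Theory Num.Theory.
Import numFieldNormedType.Exports.
Local Open Scope ring_scope.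

(* A state u in R^{Z_K x Z_M} is represented
   by any u : int -> int -> R, of which only the values at reduced indices
   (k mod K, j mod M) are ever read. *)

Section Defs.
Variable R : realType.
Variables K M : nat.

Definition state := int -> int -> R.

Definition uc (u : state) (k j : int) : R := u (modz k K%:Z) (modz j M%:Z).

Variable alpha : int -> R.
Variables beta gamma : int -> int -> R.
Variable lambda : int -> int -> int -> R.

Definition al (k : int) : R := alpha (modz k K%:Z).
Definition be (k l : int) : R := beta (modz k K%:Z) (modz l K%:Z).
Definition ga (k l : int) : R := gamma (modz k K%:Z) (modz l K%:Z).
Definition la (k a b : int) : R :=
  lambda (modz k K%:Z) (modz a K%:Z) (modz b K%:Z).

Definition ww (u : state) (k j : int) : R :=
  (uc u k j ^+ 2 + uc u k j * uc u k (j + 1) + uc u k (j + 1) ^+ 2) / 3%:R.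
Definition bb (u : state) (k l j : int) : R :=
  (uc u k j * uc u (k + l) j + uc u k (j + 1) * uc u (k + l) (j + 1)) / 2%:R.
Definition rr (u : state) (k l j : int) : R :=
  uc u (k - l) j * uc u (k - l) (j + 1).
Definition pp (u : state) (k l l' j : int) : R :=
  (2%:R * uc u (k - l) j * uc u (k - l') j
   + uc u (k - l) j * uc u (k - l') (j + 1)
   + uc u (k - l) (j + 1) * uc u (k - l') j
   + 2%:R * uc u (k - l) (j + 1) * uc u (k - l') (j + 1)) / 6%:R.

(* sums over l in Z_K^* are over l = 1, ..., K-1 *)
Definition GG (u : state) (k j : int) : R :=
  al k * ww u k j
  + \sum_(1 <= l < K) be k l%:Z * bb u k l%:Z j
  + \sum_(1 <= l < K) ga k l%:Z * rr u k l%:Z j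
  + \sum_(1 <= l < K) \sum_(1 <= l' < K | l' != l)
        la k (k - l%:Z) (k - l'%:Z) * pp u k l%:Z l'%:Z j.

Definition BB (u : state) (k j : int) : R := GG u k j - GG u k (j - 1).

Definition upd (u : state) (k j : int) (t : R) : state :=
  fun k' j' => if (modz k' K%:Z == modz k K%:Z) && (modz j' M%:Z == modz j M%:Z)
               then t else u k' j'.

Definition pd (F : state -> R) (u : state) (k j : int) : R :=
  derive1 (fun t => F (upd u k j t)) (uc u k j).

Definition C1 : Prop :=
  forall k a : int, modz a K%:Z != 0 -> be k a = 2%:R * ga (k + a) a.

Definition C2 : Prop :=
  forall k a a' : int, modz a K%:Z != 0 -> modz a' K%:Z != 0 ->
    modz a K%:Z != modz a' K%:Z ->
    la k (k - a) (k - a') = la k (k - a') (k - a) /\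
    la k (k - a) (k - a') = la (k - a) k (k - a').

End Defs.

(* Main.v *)
Require Import Defs.
From HB Require Import structures.
From mathcomp Require Import all_boot all_order all_algebra.
From mathcomp Require Import reals topology normedtype derive.
From mathcomp Require Import ring lra zify.
From mathcomp Require boolp.
Import Order.TTheory GRing.Theory Num.Theory.
Import numFieldNormedType.Exports.
Set Implicit Arguments. Unset Strict Implicit. Unset Printing Implicit Defensive.
Local Open Scope ring_scope.

Lemma eqmodN (m n d : int) : (modz (- m) d == modz (- n) d) = (modz m d == modz n d).
Proof.
have := eqz_modDl (m + n) (- m) (- n) d.
rewrite (_ : m + n - m = n); last by ring.
rewrite (_ : m + n - n = m); last by ring.
by move=> <-; rewrite eq_sym.
Qed.

Lemma eqmodB (k a b d : int) : (modz (k - a) d == modz (k - b) d) = (modz a d == modz b d).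
Proof. by rewrite eqz_modDl eqmodN. Qed.

Lemma eqmodD (k a b d : int) : (modz (k + a) d == modz (k + b) d) = (modz a d == modz b d).
Proof. by rewrite eqz_modDl. Qed.

Lemma natmod (K x y : nat) : (x < K)%N -> (y < K)%N ->
  (modz x%:Z K%:Z == modz y%:Z K%:Z) = (x == y).
Proof.
move=> hx hy; rewrite !modz_small //; apply/andP; split => //; lia.
Qed.

Lemma modz_nat_small (K x : nat) : (x < K)%N -> modz x%:Z K%:Z = x%:Z.
Proof. move=> hx; rewrite modz_small //; apply/andP; split => //; lia. Qed.

Definition per (R : Type) (N : nat) (f : int -> R) := forall x, f (modz x N%:Z) = f x.

Lemma sum_shift1 (R : realType) N (f : int -> R) : per N f ->
  \sum_(0 <= i < N) f (i%:Z + 1) = \sum_(0 <= i < N) f i%:Z.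
Proof.
move=> hp; case: N hp => [|n] hp; first by rewrite !big_geq.
rewrite big_nat_recr //= [RHS]big_nat_recl //.
have -> : f (n%:Z + 1) = f 0.
  rewrite -hp -[RHS]hp; congr f.
  have -> : n%:Z + 1 = n.+1%:Z by lia.
  by rewrite modzz mod0z.
rewrite addrC; congr (_ + _); apply: eq_bigr => i _; congr f; lia.
Qed.

Lemma sum_shift_nat (R : realType) N (f : int -> R) (m : nat) : per N f ->
  \sum_(0 <= i < N) f (i%:Z + m%:Z) = \sum_(0 <= i < N) f i%:Z.
Proof.
elim: m f => [|m IH] f hp.
  by apply: eq_bigr => i _; rewrite addr0.
have hg : per N (fun x => f (x + m%:Z)).
  by move=> x; rewrite -hp modzDml hp.
rewrite -(IH f hp) -(sum_shift1 hg); apply: eq_bigr => i _; congr f; lia.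
Qed.

Lemma sum_shift (R : realType) N (f : int -> R) (a : int) : per N f ->
  \sum_(0 <= i < N) f (i%:Z + a) = \sum_(0 <= i < N) f i%:Z.
Proof.
move=> hp; case: N hp => [|n] hp; first by rewrite !big_geq.
have ge0 : 0 <= modz a n.+1%:Z by apply: modz_ge0.
have -> : \sum_(0 <= i < n.+1) f (i%:Z + a) = \sum_(0 <= i < n.+1) f (i%:Z + (`|modz a n.+1%:Z|%N)%:Z).
  apply: eq_bigr => i _; rewrite gez0_abs // -[RHS]hp modzDmr hp //.
exact: sum_shift_nat.
Qed.

Lemma sum_rev (R : realType) N (f : int -> R) (k : nat) : per N f ->
  \sum_(0 <= l < N) f (k%:Z - l%:Z) = \sum_(0 <= a < N) f a%:Z.
Proof.
move=> hp; rewrite big_nat_rev /=.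
rewrite -(sum_shift (k%:Z + 1 - N%:Z) hp).
apply: eq_big_nat => i /andP [_ hi]; congr f; lia.
Qed.

Lemma reindex1 (R : realType) N (f : int -> R) (k : nat) : (k < N)%N -> per N f ->
  \sum_(1 <= l < N) f (k%:Z - l%:Z) = \sum_(0 <= a < N) (a != k)%:R * f a%:Z.
Proof.
move=> hk hp.
have E := sum_rev k hp; rewrite big_ltn in E; last by lia.
rewrite subr0 [X in _ = X](bigD1_seq k) /= in E; [|by rewrite mem_index_iota; lia|exact: iota_uniq].
move/addrI: E => ->; rewrite big_mkcond /=; apply: eq_bigr => i _.
by case: (i != k) => /=; rewrite ?mulr1n ?mulr0n ?mul1r ?mul0r.
Qed.

Definition d3 (R : realType) (k a b : nat) : R := ((k != a) && (k != b) && (a != b))%:R.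

Lemma reindex2 (R : realType) N (h : int -> int -> R) (k : nat) : (k < N)%N ->
  (forall a b, h (modz a N%:Z) b = h a b) -> (forall a b, h a (modz b N%:Z) = h a b) ->
  \sum_(1 <= l < N) \sum_(1 <= l' < N | l' != l) h (k%:Z - l%:Z) (k%:Z - l'%:Z)
  = \sum_(0 <= a < N) \sum_(0 <= b < N) d3 R k a b * h a%:Z b%:Z.
Proof.
move=> hk ha hb.
transitivity (\sum_(1 <= l < N) (fun a => \sum_(0 <= b < N) (b != k)%:R *
    ((modz b%:Z N%:Z != modz a N%:Z)%:R * h a b%:Z)) (k%:Z - l%:Z)).
  apply: eq_big_nat => l hl; rewrite big_mkcond /=.
  rewrite -(reindex1 (f := fun b => (modz b N%:Z != modz (k%:Z - l%:Z) N%:Z)%:R * h (k%:Z - l%:Z) b)) //.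
    apply: eq_big_nat => l' hl' /=.
    rewrite eqmodB natmod; [|lia|lia].
    by case: (l' != l) => /=; rewrite ?mulr1n ?mulr0n ?mul1r ?mul0r.
  by move=> x /=; rewrite modz_mod hb.
rewrite (reindex1 (f := fun a => \sum_(0 <= b < N) (b != k)%:R *
    ((modz b%:Z N%:Z != modz a N%:Z)%:R * h a b%:Z))) //; last first.
  by move=> x /=; apply: eq_bigr => b _; rewrite modz_mod ha.
apply: eq_big_nat => a /andP [_ hia]; rewrite mulr_sumr; apply: eq_big_nat => b /andP [_ hib].
rewrite !modz_nat_small // eqz_nat /d3 (eq_sym a k) (eq_sym b k) (eq_sym b a).
by case: (k != a); case: (k != b); case: (a != b) => /=; rewrite ?mulr1n ?mulr0n ?mul1r ?mul0r.
Qed.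

Section G.
Variable R : realType.
Variable K : nat.
Variables (alpha : int -> R) (beta gamma : int -> int -> R) (lambda : int -> int -> int -> R).
Local Notation AL := (al K alpha).
Local Notation BE := (be K beta).
Local Notation GA := (ga K gamma).
Local Notation LA := (la K lambda).

Definition pf (A B : int -> R) (a b : int) : R :=
  (2%:R * A a * A b + A a * B b + B a * A b + 2%:R * B a * B b) / 6%:R.
Definition Gw (A B : int -> R) k : R := AL k * ((A k ^+ 2 + A k * B k + B k ^+ 2) / 3%:R).
Definition Gb (A B : int -> R) k : R := \sum_(1 <= l < K) BE k l%:Z *
   ((A k * A (k + l%:Z) + B k * B (k + l%:Z)) / 2%:R).
Definition Gr (A B : int -> R) k : R :=
  \sum_(1 <= l < K) GA k l%:Z * (A (k - l%:Z) * B (k - l%:Z)).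
Definition Gp (A B : int -> R) k : R :=
  \sum_(1 <= l < K) \sum_(1 <= l' < K | l' != l)
     LA k (k - l%:Z) (k - l'%:Z) * pf A B (k - l%:Z) (k - l'%:Z).
Definition Gf A B k := Gw A B k + Gb A B k + Gr A B k + Gp A B k.

Lemma GG_Gf M u k j : GG K M alpha beta gamma lambda u k j =
  Gf (fun x => uc K M u x j) (fun x => uc K M u x (j + 1)) k.
Proof. reflexivity. Qed.


Definition S3 (F : nat -> nat -> nat -> R) : R :=
  \sum_(0 <= k < K) \sum_(0 <= a < K) \sum_(0 <= b < K) F k a b.

Lemma S3B F G : S3 F - S3 G = S3 (fun k a b => F k a b - G k a b).
Proof.
rewrite /S3 -sumrB; apply: eq_bigr => k _; rewrite -sumrB; apply: eq_bigr => a _.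
by rewrite -sumrB.
Qed.

Lemma S3D F G : S3 F + S3 G = S3 (fun k a b => F k a b + G k a b).
Proof.
rewrite /S3 -big_split; apply: eq_bigr => k _; rewrite -big_split; apply: eq_bigr => a _.
by rewrite -big_split.
Qed.

Lemma S3Z F c : S3 F * c = S3 (fun k a b => F k a b * c).
Proof.
rewrite /S3 mulr_suml; apply: eq_bigr => k _; rewrite mulr_suml; apply: eq_bigr => a _.
by rewrite mulr_suml.
Qed.

Lemma S3_eq F G : (forall k a b, (k < K)%N -> (a < K)%N -> (b < K)%N -> F k a b = G k a b) ->
  S3 F = S3 G.
Proof.
move=> h; rewrite /S3; apply: eq_big_nat => k /andP[_ hk]; apply: eq_big_nat => a /andP[_ ha].
by apply: eq_big_nat => b /andP[_ hb]; apply: h.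
Qed.

Lemma S3_swap F : S3 F = S3 (fun k a b => F a k b).
Proof. by rewrite /S3 exchange_big_nat. Qed.

Lemma S3_rot F : S3 F = S3 (fun k a b => F b k a).
Proof.
rewrite /S3 exchange_big_nat; apply: eq_bigr => a _.
by rewrite exchange_big_nat.
Qed.


Hypothesis hC1 : C1 K beta gamma.
Hypothesis hC2 : C2 K lambda.

Lemma perD (X : int -> R) (pX : per K X) x c : X (modz x K%:Z + c) = X (x + c).
Proof. by rewrite -pX modzDml pX. Qed.

Definition HA (X : int -> R) : R := \sum_(0 <= k < K) AL k%:Z * (X k%:Z ^+ 3 / 3%:R).
Definition HB (X : int -> R) : R := \sum_(1 <= l < K) \sum_(0 <= k < K)
   GA (k%:Z + l%:Z) l%:Z * (X k%:Z ^+ 2 * X (k%:Z + l%:Z)).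
Definition HC (X : int -> R) : R :=
  S3 (fun k a b => d3 R k a b * LA k%:Z a%:Z b%:Z * (X k%:Z * X a%:Z * X b%:Z) / 3%:R).
Definition HH X := HA X + HB X + HC X.

Lemma keyA X Y : \sum_(0 <= k < K) Gw X Y k%:Z * (X k%:Z - Y k%:Z) = HA X - HA Y.
Proof. rewrite /HA -sumrB; apply: eq_bigr => k _; rewrite /Gw; ring. Qed.

Lemma keyB X Y : per K X -> per K Y ->
  \sum_(0 <= k < K) Gb X Y k%:Z * (X k%:Z - Y k%:Z)
  + \sum_(0 <= k < K) Gr X Y k%:Z * (X k%:Z - Y k%:Z) = HB X - HB Y.
Proof.
move=> pX pY.
have e1 : \sum_(0 <= k < K) Gb X Y k%:Z * (X k%:Z - Y k%:Z) =
   \sum_(1 <= l < K) \sum_(0 <= k < K) BE k%:Z l%:Z *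
   ((X k%:Z * X (k%:Z + l%:Z) + Y k%:Z * Y (k%:Z + l%:Z)) / 2%:R) * (X k%:Z - Y k%:Z).
  by rewrite exchange_big_nat; apply: eq_bigr => k _; rewrite /Gb mulr_suml.
have e2 : \sum_(0 <= k < K) Gr X Y k%:Z * (X k%:Z - Y k%:Z) =
   \sum_(1 <= l < K) \sum_(0 <= k < K) GA (k%:Z + l%:Z) l%:Z *
   (X k%:Z * Y k%:Z) * (X (k%:Z + l%:Z) - Y (k%:Z + l%:Z)).
  transitivity (\sum_(1 <= l < K) \sum_(0 <= k < K) GA k%:Z l%:Z *
    (X (k%:Z - l%:Z) * Y (k%:Z - l%:Z)) * (X k%:Z - Y k%:Z)).
    by rewrite exchange_big_nat; apply: eq_bigr => k _; rewrite /Gr mulr_suml.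
  apply: eq_bigr => l _.
  rewrite -(sum_shift (f := fun x => GA x l%:Z * (X (x - l%:Z) * Y (x - l%:Z)) * (X x - Y x)) l%:Z).
    by apply: eq_bigr => k _; rewrite addrK.
  by move=> x /=; rewrite /ga modz_mod !(perD pX) !(perD pY) pX pY.
rewrite e1 e2 -big_split /HB -sumrB; apply: eq_big_nat => l /andP[hl1 hl2].
rewrite -big_split -sumrB; apply: eq_bigr => k _.
have hl : modz l%:Z K%:Z != 0 by rewrite modz_nat_small //; apply/eqP; lia.
rewrite (hC1 k%:Z hl) /=; by field.
Qed.

Lemma neq0mod (x y : nat) : (x < K)%N -> (y < K)%N -> x != y ->
  modz (x%:Z - y%:Z) K%:Z != 0.
Proof.
move=> hx hy hxy; rewrite -(mod0z K%:Z) -(subrr x%:Z) eqmodB natmod //.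
by rewrite eq_sym.
Qed.

Lemma lam_sym (k a b : nat) : (k < K)%N -> (a < K)%N -> (b < K)%N ->
  k != a -> k != b -> a != b ->
  LA k%:Z a%:Z b%:Z = LA k%:Z b%:Z a%:Z /\ LA k%:Z a%:Z b%:Z = LA a%:Z k%:Z b%:Z.
Proof.
move=> hk ha hb h1 h2 h3.
have e : forall x y : int, x - (x - y) = y by move=> x y; ring.
have n1 := neq0mod hk ha h1.
have n2 := neq0mod hk hb h2.
have n3 : modz (k%:Z - a%:Z) K%:Z != modz (k%:Z - b%:Z) K%:Z by rewrite eqmodB natmod.
have H := hC2 k%:Z.
by have := H _ _ n1 n2 n3; rewrite !e.
Qed.

Lemma d3_swap (k a b : nat) : d3 R a k b = d3 R k a b.
Proof.
rewrite /d3 [a == k]eq_sym.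
by case: (k == a); case: (k == b); case: (a == b).
Qed.

Lemma d3_rot (k a b : nat) : d3 R b k a = d3 R k a b.
Proof.
rewrite /d3 [b == k]eq_sym [b == a]eq_sym.
by case: (k == a); case: (k == b); case: (a == b).
Qed.

Definition Fl (X Y : int -> R) (k a b : nat) : R :=
  d3 R k a b * LA k%:Z a%:Z b%:Z * (pf X Y a%:Z b%:Z * (X k%:Z - Y k%:Z)).

Lemma tri X Y (k a b : nat) : (k < K)%N -> (a < K)%N -> (b < K)%N ->
  Fl X Y k a b + Fl X Y a k b + Fl X Y b k a =
  d3 R k a b * LA k%:Z a%:Z b%:Z * (X k%:Z * X a%:Z * X b%:Z - Y k%:Z * Y a%:Z * Y b%:Z).
Proof.
move=> hk ha hb; rewrite /Fl (d3_swap k a b) (d3_rot k a b).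
case hd: ((k != a) && (k != b) && (a != b)); last first.
  by rewrite /d3 hd /= !mulr0n !mul0r !addr0.
move: hd => /andP[/andP[h1 h2] h3].
have [s1 s2] := lam_sym hk ha hb h1 h2 h3.
have h1' : b != k by rewrite eq_sym.
have h3' : b != a by rewrite eq_sym.
have [s3 s4] := lam_sym hb hk ha h1' h3' h1.
rewrite -s2 s4 -s1 /pf; by field.
Qed.

Lemma keyC X Y : per K X -> per K Y ->
  \sum_(0 <= k < K) Gp X Y k%:Z * (X k%:Z - Y k%:Z) = HC X - HC Y.
Proof.
move=> pX pY.
have e3 : \sum_(0 <= k < K) Gp X Y k%:Z * (X k%:Z - Y k%:Z) = S3 (Fl X Y).
  rewrite /S3; apply: eq_big_nat => k /andP[_ hk].
  rewrite /Gp (reindex2 (h := fun a b => LA k%:Z a b * pf X Y a b)) //.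
  - rewrite mulr_suml; apply: eq_bigr => a _; rewrite mulr_suml; apply: eq_bigr => b _.
    by rewrite /Fl /=; ring.
  - by move=> x y /=; rewrite /la modz_mod /pf !pX !pY.
  - by move=> x y /=; rewrite /la modz_mod /pf !pX !pY.
rewrite e3 /HC S3B.
have h3 : S3 (Fl X Y) + S3 (Fl X Y) + S3 (Fl X Y) =
    S3 (fun k a b => d3 R k a b * LA k%:Z a%:Z b%:Z *
       (X k%:Z * X a%:Z * X b%:Z - Y k%:Z * Y a%:Z * Y b%:Z)).
  rewrite {2}(S3_swap (Fl X Y)) {2}(S3_rot (Fl X Y)) !S3D.
  by apply: S3_eq => k a b hk ha hb; apply: tri.
have -> : S3 (Fl X Y) = (S3 (Fl X Y) + S3 (Fl X Y) + S3 (Fl X Y)) / 3%:R by field.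
rewrite h3 S3Z; apply: S3_eq => k a b _ _ _; ring.
Qed.

Lemma key X Y : per K X -> per K Y ->
  \sum_(0 <= k < K) Gf X Y k%:Z * (X k%:Z - Y k%:Z) = HH X - HH Y.
Proof.
move=> pX pY.
have -> : \sum_(0 <= k < K) Gf X Y k%:Z * (X k%:Z - Y k%:Z) =
  \sum_(0 <= k < K) Gw X Y k%:Z * (X k%:Z - Y k%:Z) +
  (\sum_(0 <= k < K) Gb X Y k%:Z * (X k%:Z - Y k%:Z) +
   \sum_(0 <= k < K) Gr X Y k%:Z * (X k%:Z - Y k%:Z)) +
  \sum_(0 <= k < K) Gp X Y k%:Z * (X k%:Z - Y k%:Z).
  by rewrite -!big_split /=; apply: eq_bigr => k _; rewrite /Gf; ring.
rewrite keyA keyB // keyC // /HH; ring.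
Qed.


Lemma neqD (k : int) (l : nat) : (1 <= l < K)%N -> modz (k + l%:Z) K%:Z != modz k K%:Z.
Proof.
move=> hl; rewrite -{2}(addr0 k) eqmodD mod0z modz_nat_small; last by lia.
by apply/eqP; lia.
Qed.

Lemma neqB (k : int) (l : nat) : (1 <= l < K)%N -> modz (k - l%:Z) K%:Z != modz k K%:Z.
Proof.
move=> hl; rewrite -{2}(subr0 k) eqmodB mod0z modz_nat_small; last by lia.
by apply/eqP; lia.
Qed.

Lemma Gf_lin (A A' B C : int -> R) (k : int) :
  (forall x, modz x K%:Z != modz k K%:Z -> A x = A' x) ->
  Gf A B k - Gf C A k - AL k * (A k * (B k - C k)) / 3%:R =
  Gf A' B k - Gf C A' k - AL k * (A' k * (B k - C k)) / 3%:R.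
Proof.
move=> hA.
have eb : Gb A B k - Gb C A k = Gb A' B k - Gb C A' k.
  rewrite /Gb -!sumrB; apply: eq_big_nat => l hl.
  rewrite (hA (k + l%:Z)); [ring | exact: neqD].
have er : Gr A B k - Gr C A k = Gr A' B k - Gr C A' k.
  rewrite /Gr -!sumrB; apply: eq_big_nat => l hl.
  by rewrite (hA (k - l%:Z)) //; exact: neqB.
have ep : Gp A B k - Gp C A k = Gp A' B k - Gp C A' k.
  rewrite /Gp -!sumrB; apply: eq_big_nat => l hl.
  rewrite -!sumrB [LHS]big_nat_cond [RHS]big_nat_cond; apply: eq_bigr => l' /andP[hl' _].
  rewrite /pf (hA (k - l%:Z)); last exact: neqB.
  by rewrite (hA (k - l'%:Z)) //; exact: neqB.
have eb2 : Gb A B k = Gb A' B k - Gb C A' k + Gb C A k by rewrite -eb; ring.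
have er2 : Gr A B k = Gr A' B k - Gr C A' k + Gr C A k by rewrite -er; ring.
have ep2 : Gp A B k = Gp A' B k - Gp C A' k + Gp C A k by rewrite -ep; ring.
rewrite /Gf eb2 er2 ep2 /Gw; ring.
Qed.

End G.

Lemma der_lin (R: realType) (s c x : R) : derive1 (fun t => s * t + c) x = s.
Proof.
rewrite derive1E.
have H : is_derive x (1:R) (fun t : R => s * t + c) s.
  have h1 := @is_derive_id R R x 1.
  have h2 := is_deriveZ s h1.
  have h3 := is_deriveD h2 (@is_derive_cst R R R c x 1).
  apply: (is_derive_eq h3).
  by rewrite /= addr0 -[_%:A]/(s * 1) mulr1.
exact: derive_val.
Qed.

Section P.
Variable R : realType.
Variables K M : nat.
Variables (alpha : int -> R) (beta gamma : int -> int -> R) (lambda : int -> int -> int -> R).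
Local Notation AL := (al K alpha).
Local Notation UC := (uc K M).
Local Notation BBB := (BB K M alpha beta gamma lambda).
Local Notation GGG := (GG K M alpha beta gamma lambda).

Lemma uc_upd (u : state R) k j t x y : UC (upd K M u k j t) x y =
  if (modz x K%:Z == modz k K%:Z) && (modz y M%:Z == modz j M%:Z) then t else UC u x y.
Proof. by rewrite /uc /upd !modz_mod. Qed.

Lemma GG_perj (u : state R) k j j' : modz j M%:Z = modz j' M%:Z -> GGG u k j = GGG u k j'.
Proof.
move=> hj; rewrite !GG_Gf; congr Gf; apply: boolp.funext => x; rewrite /uc ?hj //.
by rewrite -modzDml hj modzDml.
Qed.

Lemma mod1 (y : int) : modz y 1 = 0.
Proof.
have h1 : 0 <= modz y 1 by apply: modz_ge0.
have h2 : modz y 1 < 1 by apply: ltz_pmod.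
lia.
Qed.

Lemma pd_val (u : state R) k j : (0 < M)%N ->
  pd K M (fun v => BBB v k j) u k j = AL k * (UC u k (j + 1) - UC u k (j - 1)) / 3%:R.
Proof.
move=> hM.
case: (ltnP 1 M) => hM2; last first.
  have M1 : M = 1%N by lia.
  have e : forall (v : state R) x y y', UC v x y = UC v x y'.
    by move=> v x y y'; rewrite /uc M1 !mod1.
  rewrite /pd (e u k (j + 1) (j - 1)) subrr mulr0 mul0r.
  transitivity (derive1 (fun t : R => 0 * t + 0) (UC u k j)); last exact: der_lin.
  congr (derive1 _ _); apply: boolp.funext => t /=.
  rewrite mul0r addr0 /BB !GG_Gf.
  have -> : (fun x => UC (upd K M u k j t) x j) = (fun x => UC (upd K M u k j t) x (j - 1)).
    by apply: boolp.funext => x; apply: e.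
  have -> : (fun x => UC (upd K M u k j t) x (j + 1)) = (fun x => UC (upd K M u k j t) x (j - 1 + 1)).
    by apply: boolp.funext => x; apply: e.
  by rewrite subrr.
set U := fun x => UC u x j.
set Y := fun x => UC u x (j + 1).
set Z := fun x => UC u x (j - 1).
set s := AL k * (Y k - Z k) / 3%:R.
set c := Gf K alpha beta gamma lambda U Y k - Gf K alpha beta gamma lambda Z U k
         - AL k * (U k * (Y k - Z k)) / 3%:R.
have hj1 : modz (j + 1) M%:Z != modz j M%:Z.
  by apply: (@neqD M j 1%N); lia.
have hj2 : modz (j - 1) M%:Z != modz j M%:Z.
  by apply: (@neqB M j 1%N); lia.
have F : forall t, BBB (upd K M u k j t) k j = s * t + c.
  move=> t; rewrite /BB !GG_Gf subrK.
  have -> : (fun x => UC (upd K M u k j t) x (j + 1)) = Y.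
    by apply: boolp.funext => x; rewrite uc_upd (negbTE hj1) andbF.
  have -> : (fun x => UC (upd K M u k j t) x (j - 1)) = Z.
    by apply: boolp.funext => x; rewrite uc_upd (negbTE hj2) andbF.
  have hA : forall x, modz x K%:Z != modz k K%:Z ->
      (fun x => UC (upd K M u k j t) x j) x = U x.
    by move=> x hx; rewrite /= uc_upd (negbTE hx).
  have := Gf_lin alpha beta gamma lambda Y Z hA.
  rewrite /= uc_upd !eqxx /= -/c => <-; rewrite /s; ring.
rewrite /pd.
transitivity (derive1 (fun t : R => s * t + c) (UC u k j)); last exact: der_lin.
by congr (derive1 _ _); apply: boolp.funext => t /=; rewrite F.
Qed.

End P.

Theorem lemma3p3 (R : realType) (K M : nat) (hK : (0 < K)%N) (hM : (0 < M)%N)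
  (alpha : int -> R) (beta gamma : int -> int -> R)
  (lambda : int -> int -> int -> R)
  (hC1 : C1 K beta gamma) (hC2 : C2 K lambda) (u : state R) :
  \sum_(0 <= k < K) \sum_(0 <= j < M)
     (uc K M u k%:Z j%:Z * BB K M alpha beta gamma lambda u k%:Z j%:Z
      - pd K M (fun v => BB K M alpha beta gamma lambda v k%:Z j%:Z) u k%:Z j%:Z)
  = 0.
Proof.
have E2 : \sum_(0 <= k < K) \sum_(0 <= j < M)
      pd K M (fun v => BB K M alpha beta gamma lambda v k%:Z j%:Z) u k%:Z j%:Z = 0.
  apply: big1 => k _.
  transitivity (al K alpha k%:Z / 3%:R * (\sum_(0 <= j < M) uc K M u k%:Z (j%:Z + 1)
      - \sum_(0 <= j < M) uc K M u k%:Z (j%:Z + -1))).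
    rewrite -sumrB mulr_sumr; apply: eq_bigr => j _; rewrite pd_val //; ring.
  have pk : per M (fun y => uc K M u k%:Z y) by move=> y; rewrite /uc modz_mod.
  rewrite (sum_shift (f := fun y => uc K M u k%:Z y) 1) //.
  by rewrite (sum_shift (f := fun y => uc K M u k%:Z y) (-1)) // subrr mulr0.
have E1 : \sum_(0 <= k < K) \sum_(0 <= j < M)
     uc K M u k%:Z j%:Z * BB K M alpha beta gamma lambda u k%:Z j%:Z = 0.
  rewrite exchange_big_nat.
  transitivity (\sum_(0 <= j < M) \sum_(0 <= k < K)
         uc K M u k%:Z j%:Z * GG K M alpha beta gamma lambda u k%:Z j%:Z
      - \sum_(0 <= j < M) \sum_(0 <= k < K)
         uc K M u k%:Z j%:Z * GG K M alpha beta gamma lambda u k%:Z (j%:Z - 1)).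
    rewrite -sumrB; apply: eq_bigr => j _; rewrite -sumrB; apply: eq_bigr => k _.
    by rewrite /BB; ring.
  have pj : per M (fun y => \sum_(0 <= k < K)
         uc K M u k%:Z y * GG K M alpha beta gamma lambda u k%:Z (y - 1)).
    move=> y /=; apply: eq_bigr => k _; rewrite {1}/uc modz_mod -/(uc K M u k%:Z y).
    congr (_ * _); apply: GG_perj; by rewrite modzDml.
  rewrite -(sum_shift (f := fun y => \sum_(0 <= k < K)
         uc K M u k%:Z y * GG K M alpha beta gamma lambda u k%:Z (y - 1)) 1) //=.
  transitivity (\sum_(0 <= j < M) (HH K alpha gamma lambda (fun x => uc K M u x j%:Z)
      - HH K alpha gamma lambda (fun x => uc K M u x (j%:Z + 1)))).
    rewrite -sumrB; apply: eq_bigr => j _.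
    have pX : forall y, per K (fun x => uc K M u x y) by move=> y x; rewrite /uc modz_mod.
    rewrite -(key alpha hC1 hC2 (pX _) (pX _)) -sumrB; apply: eq_bigr => k _.
    by rewrite addrK !GG_Gf; ring.
  have ph : per M (fun y => HH K alpha gamma lambda (fun x => uc K M u x y)).
    by move=> y /=; congr HH; apply: boolp.funext => x; rewrite /uc modz_mod.
  by rewrite sumrB (sum_shift (f := fun y => HH K alpha gamma lambda (fun x => uc K M u x y)) 1) // subrr.
rewrite (eq_bigr (fun k => \sum_(0 <= j < M) uc K M u k%:Z j%:Z * BB K M alpha beta gamma lambda u k%:Z j%:Z
   - \sum_(0 <= j < M) pd K M (fun v => BB K M alpha beta gamma lambda v k%:Z j%:Z) u k%:Z j%:Z)).
  by rewrite sumrB E1 E2 subrr.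
by move=> k _; rewrite sumrB.
Qed.
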